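(* Let $n\ge7$ and let $\mathcal{W}\subset(\mathbb{R}^{4n})^{\otimes5}$ be the set defined below, with $E=\{1,\dots,2n\}$ and $\mathcal{E}=\{2n+1,\dots,4n\}$. Then $\mathbb{I}(E,6)$ is the only decomposable tensor in $\mathbb{I}(E,6)\bmod\mathcal{W}_E$, and $\mathbb{I}(\mathcal{E},6)$ is the only decomposable tensor in $\mathbb{I}(\mathcal{E},6)\bmod\mathcal{W}_{\mathcal{E}}$.
   Context: All tensors are real; decomposable means of the form $v_1\otimes\cdots\otimes v_6$. $\mathbb{I}(E,6)\in(\mathbb{R}^E)^{\otimes6}$ is the all-ones tensor, similarly $\mathbb{I}(\mathcal{E},6)$. $\mathcal{W}_E$ (resp. $\mathcal{W}_{\mathcal{E}}$) is the set of restrictions of the tensors in $\mathcal{W}$ to indices in $E$ (resp. $\mathcal{E}$). For $\mathcal{C}\in(\mathbb{R}^I)^{\otimes d}$ and a finite $\mathcal{V}\subset(\mathbb{R}^I)^{\otimes(d-1)}$, $\mathcal{C}\bmod\mathcal{V}$ is the set of tensors with entries $\mathcal{C}(k_1|\dots|k_d)+\sum_{j=1}^dM_j^{(k_j)}(k_1|\dots|\widehat{k_j}|\dots|k_d)$ with arbitrary $M_j^{(k_j)}\in\operatorname{Span}\mathcal{V}$ chosen independently for each $j$ and each $k_j\in I$. The set $\mathcal{W}$: for $i\in\{1,\dots,n\}$ let $\alpha_i\in\mathbb{R}^{2n}$ have entries $1$ at positions $2i-1,2i$ and $0$ elsewhere; $(a|b)\in\mathbb{R}^{4n}$ is concatenation.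 With $1\le i_1<i_2<i_3<i_4\le n$ and $1\le k_1<k_2\le n$ ranging over all choices, let $U$ be the set of vectors of the 16 types: $(\alpha_{i_1}+\alpha_{i_2}+\alpha_{i_3}+\alpha_{i_4}|0)$, $(\alpha_{i_1}+\alpha_{i_2}+\alpha_{i_3}|0)$, $(\alpha_{i_1}+\alpha_{i_2}|0)$, $(\alpha_{i_1}|0)$, $(\alpha_{i_1}+\alpha_{i_2}+\alpha_{i_3}+\alpha_{i_4}|\alpha_{k_1})$, $(\alpha_{i_1}+\alpha_{i_2}|\tfrac{(n-2)^2}{(n-3)(n-1)}\alpha_{k_1})$, $(\alpha_{i_1}|\tfrac{n-2}{n-3}\alpha_{k_1})$, $(\alpha_{i_1}|\tfrac{n-1}{n-4}\alpha_{k_1})$, $(\alpha_{i_1}+\alpha_{i_2}+\alpha_{i_3}|\alpha_{k_1}+\alpha_{k_2})$, $(\alpha_{i_1}+\alpha_{i_2}|\tfrac{n-2}{n-3}(\alpha_{k_1}+\alpha_{k_2}))$, $(\alpha_{i_1}+\alpha_{i_2}|\tfrac{n-2}{n-4}\alpha_{k_1})$, $(0|\alpha_{k_1})$, $(\alpha_{i_1}+\alpha_{i_2}+\alpha_{i_3}|\tfrac{n-3}{n-4}\alpha_{k_1})$, $(\alpha_{i_1}+\alpha_{i_2}+\alpha_{i_3}|\tfrac{n-2}{n-1}\alpha_{k_1})$, $(\alpha_{i_1}|\tfrac{n-1}{n-3}(\alpha_{k_1}+\alpha_{k_2}))$, $(0|\alpha_{k_1}+\alpha_{k_2})$ (types with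 only $i_1$ or only $k_1$ omit the other indices; $k_1$ alone ranges over $\{1,\dots,n\}$). Let $\pi(a_1,\dots,a_{2n},b_1,\dots,b_{2n})=(b_2,\dots,b_{2n},b_1,a_2,\dots,a_{2n},a_1)$. Set $\mathcal{W}_1=\{u^{\otimes5}:u\in U\}$, $\mathcal{W}_2=\{(\pi u)^{\otimes5}:u\in U\}$, $\mathcal{W}=\mathcal{W}_1\cup\mathcal{W}_2$. *)

(* Defs.v *)
From HB Require Import structures.
From mathcomp Require Import all_boot all_order all_algebra.
From mathcomp Require Import reals.
Set Implicit Arguments. Unset Strict Implicit. Unset Printing Implicit Defensive.
Import Order.TTheory GRing.Theory Num.Theory.
Local Open Scope ring_scope.

Definition mtensor (R : realType) (d m : nat) := {ffun 'I_d -> 'I_m} -> R.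

Definition ones (R : realType) (d m : nat) : mtensor R d m := fun _ => 1.

Definition decomposable (R : realType) (d m : nat) (T : mtensor R d m) : Prop :=
  exists v : 'I_d -> 'I_m -> R, forall k, T k = \prod_(i < d) v i (k i).

Definition in_span (R : realType) (d m : nat) (P : mtensor R d m -> Prop)
  (M : mtensor R d m) : Prop :=
  exists (N : nat) (f : 'I_N -> mtensor R d m) (c : 'I_N -> R),
    (forall i, P (f i)) /\ forall k, M k = \sum_(i < N) c i * f i k.

(* T belongs to  C mod V : entries C(k) + sum_j M_j^{(k_j)}(k without k_j) *)
Definition mod_set (R : realType) (d m : nat) (C : mtensor R d.+1 m)
  (P : mtensor R d m -> Prop) (T : mtensor R d.+1 m) : Prop :=
  exists M : 'I_d.+1 -> 'I_m -> mtensor R d m,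
    (forall j x, in_span P (M j x)) /\
    forall k : {ffun 'I_d.+1 -> 'I_m},
      T k = C k + \sum_(j < d.+1) M j (k j) [ffun i : 'I_d => k (lift j i)].

(* Vectors of R^{4n} as functions nat -> R, 0-based positions 0..4n-1.
   alpha_i (i : 'I_n, 0-based) has ones at positions 2i, 2i+1 of R^{2n}.
   vecU S c K = (sum_{i in S} alpha_i | c * sum_{k in K} alpha_k). *)
Definition vecU (R : realType) (n : nat) (S : {set 'I_n}) (c : R) (K : {set 'I_n})
  : nat -> R := fun p =>
  if (p < 2 * n)%N then \sum_(i in S) (if (p./2 == i)%N then 1 else 0)
  else c * \sum_(k in K) (if ((p - 2 * n)./2 == k)%N then 1 else 0).

(* The 16 types: (|S|, |K|, coefficient of the second block). *)
Definition Utypes (R : realType) (n : nat) : seq (nat * nat * R) :=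
  let N := n%:R : R in
  [:: (4%N, 0%N, 1); (3%N, 0%N, 1); (2%N, 0%N, 1); (1%N, 0%N, 1);
      (4%N, 1%N, 1);
      (2%N, 1%N, (N - 2) ^+ 2 / ((N - 3) * (N - 1)));
      (1%N, 1%N, (N - 2) / (N - 3));
      (1%N, 1%N, (N - 1) / (N - 4));
      (3%N, 2%N, 1);
      (2%N, 2%N, (N - 2) / (N - 3));
      (2%N, 1%N, (N - 2) / (N - 4));
      (0%N, 1%N, 1);
      (3%N, 1%N, (N - 3) / (N - 4));
      (3%N, 1%N, (N - 2) / (N - 1));
      (1%N, 2%N, (N - 1) / (N - 3));
      (0%N, 2%N, 1)].

Definition inU (R : realType) (n : nat) (u : nat -> R) : Prop :=
  exists t, t \in Utypes R n /\
  exists S K : {set 'I_n}, #|S| = t.1.1 /\ #|K| = t.1.2 /\ u = vecU S t.2 K.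

(* pi(a_1..a_2n, b_1..b_2n) = (b_2,...,b_2n,b_1, a_2,...,a_2n,a_1), 0-based *)
Definition piv (R : realType) (n : nat) (u : nat -> R) : nat -> R := fun q =>
  if (q < 2 * n)%N then u (2 * n + (q.+1 %% (2 * n)))%N
  else u ((q - 2 * n).+1 %% (2 * n))%N.

Definition Wvec (R : realType) (n : nat) (w : nat -> R) : Prop :=
  exists u, inU n u /\ (w = u \/ w = piv n u).

(* W_E : restrictions to E = positions 0..2n-1 *)
Definition W_E (R : realType) (n : nat) (T : mtensor R 5 (2 * n)) : Prop :=
  exists w, Wvec n w /\ forall k, T k = \prod_(i < 5) w (k i).

(* W_calE : restrictions to calE = positions 2n..4n-1 (reindexed to 0..2n-1) *)
Definition W_calE (R : realType) (n : nat) (T : mtensor R 5 (2 * n)) : Prop :=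
  exists w, Wvec n w /\ forall k, T k = \prod_(i < 5) w (2 * n + k i)%N.

(* Main.v *)
Require Import Defs.
From HB Require Import structures.
From mathcomp Require Import all_boot all_order all_algebra.
From mathcomp Require Import reals.
From mathcomp Require Import zify.
From Stdlib Require Import FunctionalExtensionality.
Unset Printing Implicit Defensive.
Import Order.TTheory GRing.Theory Num.Theory.
Local Open Scope ring_scope.

Definition aE (p : nat) : nat := p./2.
Definition bE (n p : nat) : nat := ((p.+1) %% (2 * n))./2.

Definition goodk (n d : nat) (k : 'I_d -> 'I_(2 * n)) : Prop :=
  injective (fun i => aE (k i)) /\ injective (fun i => bE n (k i)).

Lemma pigeon (R : realType) n (g : nat -> R) (f : nat -> nat) (S : {set 'I_n})
  (kk : 'I_5 -> 'I_(2 * n)) :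
  (#|S| <= 4)%N ->
  (forall p, (p < 2 * n)%N -> g p != 0 -> f p \in map val (enum S)) ->
  injective (fun i => f (kk i)) -> \prod_(i < 5) g (kk i) = 0.
Proof.
move=> hS hsup hinj; apply/eqP/negPn/negP => H.
have Hall : forall i, g (kk i) != 0.
  by move=> i; apply: contra H => /eqP Hi; rewrite (bigD1 i) //= Hi mul0r.
have U : uniq (map (fun i => f (kk i)) (enum 'I_5)) by rewrite map_inj_uniq ?enum_uniq.
have sub : {subset map (fun i => f (kk i)) (enum 'I_5) <= map val (enum S)}.
  by move=> z /mapP [i _ ->]; apply: hsup (ltn_ord _) (Hall i).
have := uniq_leq_size U sub.
rewrite !size_map -enumT size_enum_ord -cardE => h; by have := leq_trans h hS.
Qed.

Lemma sum_supp (R : realType) n (S : {set 'I_n}) (x : nat) :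
  (\sum_(i in S) (if (x == i)%N then 1 else 0) : R) != 0 -> x \in map val (enum S).
Proof.
apply: contraR => H; apply/eqP; rewrite big1 // => i iS; case: eqP => // E.
by exfalso; apply/negP: H; rewrite negbK E; apply: map_f; rewrite mem_enum.
Qed.

Lemma mul_supp (R : realType) (c s : R) : c * s != 0 -> s != 0.
Proof. by apply: contra => /eqP ->; rewrite mulr0. Qed.

Lemma Ubound (R : realType) n t : t \in Utypes R n -> (t.1.1 <= 4)%N && (t.1.2 <= 4)%N.
Proof.
have : all (fun t : nat * nat * R => (t.1.1 <= 4)%N && (t.1.2 <= 4)%N) (Utypes R n).
  by rewrite /Utypes /=.
by move/allP; apply.
Qed.

Lemma key_E (R : realType) n (T : mtensor R 5 (2 * n)) (kk : {ffun 'I_5 -> 'I_(2 * n)}) :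
  @W_E R n T -> goodk n 5 kk -> T kk = 0.
Proof.
move=> [w [[u [[t [tU [S [K [hS [hK Hu]]]]]] Hw]] HT]] [ia ib].
rewrite HT; have /andP [h1 h2] := Ubound _ _ _ tU.
case: Hw => -> ; rewrite Hu.
- apply: (@pigeon R n _ aE S kk) => //; first by rewrite hS.
  move=> p hp; rewrite /vecU hp /aE; exact: (sum_supp R n S (p ./2)).
- apply: (@pigeon R n _ (bE n) K kk) => //; first by rewrite hK.
  move=> p hp; rewrite /piv hp /vecU ifF; last lia.
  rewrite addKn => H; rewrite ?/aE ?/bE; apply: (sum_supp R n K); exact: mul_supp R _ _ H.
Qed.

Lemma key_calE (R : realType) n (T : mtensor R 5 (2 * n)) (kk : {ffun 'I_5 -> 'I_(2 * n)}) :
  @W_calE R n T -> goodk n 5 kk -> T kk = 0.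
Proof.
move=> [w [[u [[t [tU [S [K [hS [hK Hu]]]]]] Hw]] HT]] [ia ib].
rewrite HT; have /andP [h1 h2] := Ubound _ _ _ tU.
case: Hw => -> ; rewrite Hu.
- apply: (@pigeon R n (fun p => vecU S t.2 K (2 * n + p)) aE K kk) => //; first by rewrite hK.
  move=> p hp; rewrite /vecU ifF; last lia.
  rewrite addKn => H; rewrite ?/aE ?/bE; apply: (sum_supp R n K); exact: mul_supp R _ _ H.
- apply: (@pigeon R n (fun p => piv n (vecU S t.2 K) (2 * n + p)) (bE n) S kk) => //; first by rewrite hS.
  move=> p hp; rewrite /piv ifF; last lia.
  rewrite addKn /vecU ifT; last by apply: ltn_pmod; lia.
  rewrite /bE; exact: (sum_supp R n S).
Qed.

Lemma aE2 m : aE (2 * m) = m.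
Proof. rewrite /aE; lia. Qed.

Lemma bE2 n m : (m < n)%N -> bE n (2 * m) = m.
Proof. move=> h; rewrite /bE modn_small; lia. Qed.

Lemma lt7 n (hn : (7 <= n)%N) (j : 'I_7) : (2 * j < 2 * n)%N.
Proof. have := ltn_ord j; lia. Qed.

Lemma main_gen (R : realType) n (hn : (7 <= n)%N) (P : mtensor R 5 (2 * n) -> Prop)
  (hP : forall T (kk : {ffun 'I_5 -> 'I_(2 * n)}), P T -> goodk n 5 kk -> T kk = 0)
  (T : mtensor R 6 (2 * n)) :
  mod_set (@ones R 6 (2 * n)) P T -> decomposable T -> T = @ones R 6 (2 * n).
Proof.
move=> [M [HM HT]] [v Hv].
have step1 : forall k : {ffun 'I_6 -> 'I_(2 * n)}, goodk n 6 k -> T k = 1.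
  move=> k [ia ib]; rewrite HT /ones big1 ?addr0 // => j _.
  have [N [f [c [Hf ->]]]] := HM j (k j).
  rewrite big1 // => i _; rewrite hP ?mulr0 //.
  by split => i1 i2 /=; rewrite !ffunE => h; apply: (@lift_inj _ j); [apply: ia | apply: ib].
pose g (j : 'I_7) : 'I_(2 * n) := Ordinal (lt7 n hn j).
have cst : forall i (p q : 'I_(2 * n)) (x y : nat),
    aE p \in [:: x; y] -> bE n p \in [:: x; y] ->
    aE q \in [:: x; y] -> bE n q \in [:: x; y] -> v i p = v i q.
  move=> i p q x y hpa hpb hqa hqb.
  pose r (j : 'I_5) : 'I_7 := inord (bump (maxn x y) (bump (minn x y) j)).
  have rv : forall j : 'I_5, (r j : nat) = bump (maxn x y) (bump (minn x y) j).
    move=> j; rewrite /r inordK //; have := ltn_ord j; rewrite /bump.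
    case: leqP; case: leqP => /=; lia.
  have rxy : forall j, (r j : nat) \notin [:: x; y].
    move=> j; rewrite rv !inE negb_or /bump; have := ltn_ord j.
    case: leqP; case: leqP => /=; lia.
  have rinj : injective r.
    move=> j1 j2 /(congr1 (@nat_of_ord 7)); rewrite !rv /bump => h; apply: val_inj => /=; move: h.
    case: leqP; case: leqP => /=; case: leqP; case: leqP => /=; lia.
  have gA : forall j, aE (g j) = j by move=> j; rewrite /= aE2.
  have gB : forall j, bE n (g j) = j by move=> j; rewrite /= bE2 //; have := ltn_ord j; lia.
  pose kp (z : 'I_(2 * n)) : {ffun 'I_6 -> 'I_(2 * n)} :=
    [ffun i' => if unlift i i' is Some j then g (r j) else z].
  have good : forall z : 'I_(2 * n), aE z \in [:: x; y] -> bE n z \in [:: x; y] -> goodk n 6 (kp z).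
    move=> z za zb; split => i1 i2; rewrite !ffunE;
      case: unliftP => [j1 ->|->]; case: unliftP => [j2 ->|->] //; rewrite ?gA ?gB.
    - by move/val_inj/rinj => ->.
    - by move=> h; move: (rxy j1); rewrite h za.
    - by move=> h; move: (rxy j2); rewrite -h za.
    - by move/val_inj/rinj => ->.
    - by move=> h; move: (rxy j1); rewrite h zb.
    - by move=> h; move: (rxy j2); rewrite -h zb.
  have spl : forall z, T (kp z) = v i z * \prod_(j < 5) v (lift i j) (g (r j)).
    move=> z; rewrite Hv (bigD1_ord i) //= !ffunE unlift_none; congr (_ * _).
    by apply: eq_bigr => j _; rewrite ffunE liftK.
  have e1 := step1 _ (good p hpa hpb); have e2 := step1 _ (good q hqa hqb).
  rewrite spl in e1; rewrite spl in e2.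
  set X := \prod_(j < 5) _ in e1 e2.
  have X0 : X != 0 by apply/eqP => h; move: e1; rewrite h mulr0 => /eqP; rewrite eq_sym oner_eq0.
  by apply: (mulIf X0); rewrite e1 e2.
pose z0 : 'I_(2 * n) := g ord0.
have base : forall i p, v i p = v i z0.
  move=> i p.
  have hp2 : (2 * p./2 < 2 * n)%N by have := ltn_ord p; lia.
  pose ev : 'I_(2 * n) := Ordinal hp2.
  have ha : aE ev = aE p by rewrite /= aE2.
  have hb : bE n ev = aE p by rewrite /= bE2 //; have := ltn_ord p; rewrite /aE; lia.
  transitivity (v i ev).
    by apply: (cst i p ev (aE p) (bE n p)); rewrite ?ha ?hb !inE eqxx ?orbT.
  apply: (cst i ev z0 (aE p) 0); rewrite ?ha ?hb !inE ?eqxx ?orbT //.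
  by rewrite /z0 /= bE2 ?eqxx ?orbT //; lia.
have hg : forall j : 'I_6, (j < 7)%N by move=> j; have := ltn_ord j; lia.
pose k0 : {ffun 'I_6 -> 'I_(2 * n)} := [ffun j => g (Ordinal (hg j))].
have k0good : goodk n 6 k0.
  split => i1 i2; rewrite !ffunE /= => h; apply: val_inj => /=.
    by move: h; rewrite !aE2.
  by move: h; rewrite !bE2 // ?ltn_ord; have := ltn_ord i1; have := ltn_ord i2; lia.
apply: functional_extensionality => k.
rewrite /ones -(step1 k0 k0good) !Hv.
by apply: eq_bigr => i _; rewrite !base.
Qed.

Theorem proposition5p4 (R : realType) (n : nat) (hn : (7 <= n)%N) :
  (forall T : mtensor R 6 (2 * n)%N,
     mod_set (@ones R 6 (2 * n)%N) (@W_E R n) T -> decomposable T ->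
     T = @ones R 6 (2 * n)%N) /\
  (forall T : mtensor R 6 (2 * n)%N,
     mod_set (@ones R 6 (2 * n)%N) (@W_calE R n) T -> decomposable T ->
     T = @ones R 6 (2 * n)%N).
Proof.
split => T.
- apply: (main_gen R n hn (@W_E R n)) => T' kk; exact: key_E.
- apply: (main_gen R n hn (@W_calE R n)) => T' kk; exact: key_calE.
Qed.
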